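(* Let $G$ be a connected threshold graph of order $n\ge 4$ and size $m$ with $n-1<m<\binom{n}{2}$, with $c$ type 1 vertices, backwards zero position sequence $(b_1,\ldots,b_z)$ and $F_1=\sum_{i=1}^z b_i^2$. Let $\xi\in\mathbb{R}$ be the greatest real root of \[P(x)=x^3-(c+1)x^2+\Big(c-\sum_{i=1}^z b_i\Big)x+\Big(c\sum_{i=1}^z b_i-F_1\Big).\] Then $\xi$ is a simple root of $P$ and $|\xi|>|\eta|$ for every other root $\eta$ of $P$.
   Context: A threshold graph is a simple graph whose vertices can be ordered $v_1,\ldots,v_n$ so that for each $2\le i\le n$, $v_i$ is either adjacent to all of $v_1,\ldots,v_{i-1}$ (then $a_i=1$) or to none of them (then $a_i=0$); by convention $a_1=1$. Vertex $v_i$ is of type 1 if $a_i=1$ and of type 0 if $a_i=0$; $c$ and $z$ are the numbers of type 1 and type 0 vertices (here $c\ge 3$, $z\ge 1$). The backwards zero position sequence $(b_1,\ldots,b_z)$ is defined by letting $b_i$ be the number of type 1 vertices appearing after the $i$-th type 0 vertex in the order $v_1,\ldots,v_n$; one has $1\le b_i\le c-1$. *)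

(* Defs.v *)
From mathcomp Require Import all_boot all_order all_algebra all_field.
Set Implicit Arguments. Unset Strict Implicit. Unset Printing Implicit Defensive.
Import Order.TTheory GRing.Theory Num.Theory.

(* A threshold graph on vertices v_1..v_n, represented by 'I_n (v_{i+1} = i),
   given by its creation sequence a : 'I_n -> bool (a i = true: type 1). *)

Definition thr_adj n (a : 'I_n -> bool) : rel 'I_n :=
  fun i j => if (i < j)%N then a j else if (j < i)%N then a i else false.

Definition thr_size n (a : 'I_n -> bool) : nat :=
  #|[set p : 'I_n * 'I_n | (p.1 < p.2)%N && thr_adj a p.1 p.2]|.

Definition thr_connected n (a : 'I_n -> bool) : Prop :=
  forall x y : 'I_n, connect (thr_adj a) x y.

Definition num_type1 n (a : 'I_n -> bool) : nat := #|[set i : 'I_n | a i]|.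

(* for a type 0 vertex i: number of type 1 vertices after it; the backwards
   zero position sequence is (bzp a i) for the type-0 i in increasing order *)
Definition bzp n (a : 'I_n -> bool) (i : 'I_n) : nat :=
  #|[set j : 'I_n | (i < j)%N && a j]|.

Definition sum_b n (a : 'I_n -> bool) : nat := \sum_(i : 'I_n | ~~ a i) bzp a i.
Definition F1 n (a : 'I_n -> bool) : nat := \sum_(i : 'I_n | ~~ a i) (bzp a i) ^ 2.

Local Open Scope ring_scope.
Definition thrP (c S F : nat) : {poly algC} :=
  'X^3 - (c.+1)%:R *: 'X^2 + ((c%:Z - S%:Z)%:~R) *: 'X
    + (((c * S)%N%:Z - F%:Z)%:~R)%:P.

(* Main.v *)
Require Import Defs.
From mathcomp Require Import all_boot all_order all_algebra all_field.
From mathcomp Require Import ring.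
Import Order.TTheory GRing.Theory Num.Theory.
Local Open Scope ring_scope.

Lemma sub_core (c xi u v : algC) : 0 <= c -> 0 < xi -> 0 < u -> v < 0 -> u <= xi ->
  xi + u + v = c + 1 -> (c - xi) * (c - u) * (c - v) < 0 ->
  [/\ u != xi, v != xi, `|u| < `|xi| & `|v| < `|xi|].
Proof.
move=> c0 x0 u0 v0 uxi h1 hP.
have cv : 0 < c - v by rewrite subr_gt0 (lt_le_trans v0 c0).
rewrite (pmulr_llt0 _ cv) in hP.
have cR : c \is Num.real by apply: ger0_real.
have uR : u \is Num.real by apply: gtr0_real.
have uc : u < c.
  case: (real_ltgtP uR cR) => // [cu|ceq].
    have : c - u < 0 by rewrite subr_lt0.
    move=> h; rewrite (nmulr_llt0 _ h) subr_gt0 in hP.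
    by have := lt_le_trans (lt_trans hP cu) uxi; rewrite ltxx.
  by move: hP; rewrite ceq subrr mulr0 ltxx.
have xc : c < xi.
  have h : 0 < c - u by rewrite subr_gt0.
  by rewrite (pmulr_llt0 _ h) subr_lt0 in hP.
have uxi' : u < xi by apply: lt_trans uc xc.
split.
- by rewrite lt_eqF.
- by rewrite lt_eqF // (lt_trans v0 x0).
- by rewrite gtr0_norm // gtr0_norm.
- rewrite ltr0_norm // gtr0_norm // -subr_gt0.
  have -> : xi - - v = c + 1 - u.
    by rewrite -h1; ring.
  by rewrite subr_gt0 (lt_trans uc) // ltrDl ltr01.
Qed.

Lemma core (c xi u v : algC) :
  0 <= c -> xi \is Num.real -> xi + u + v = c + 1 ->
  xi*u + xi*v + u*v \is Num.real -> xi*u*v < 0 -> (c-xi)*(c-u)*(c-v) < 0 ->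
  (u \is Num.real -> u <= xi) -> (v \is Num.real -> v <= xi) ->
  [/\ u != xi, v != xi, `|u| < `|xi| & `|v| < `|xi|].
Proof.
move=> c0 xR h1 h2 h3 hP hu hv.
have cR : c \is Num.real by apply: ger0_real.
have hs : u + v = c + 1 - xi by rewrite -h1; ring.
have sR : u + v \is Num.real by rewrite hs rpredB // rpredD // rpred1.
have pR : u * v \is Num.real.
  have -> : u * v = (xi*u + xi*v + u*v) - xi * (u + v) by ring.
  by rewrite rpredB // rpredM.
case: (boolP (u \is Num.real)) => uR.
  have vR : v \is Num.real.
    have -> : v = (u + v) - u by ring.
    by rewrite rpredB.
  have xpos : 0 < xi.
    case: (real_ltgt0P xR) => // [xneg|xz].
      have := lerD (lerD (ltW xneg) (le_trans (hu uR) (ltW xneg)))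
                   (le_trans (hv vR) (ltW xneg)).
      rewrite !addr0 h1 => h.
      have : 0 < c + 1 by apply: lt_le_trans (ltr01) _; rewrite lerDr.
      by move=> hc; have := lt_le_trans hc h; rewrite ltxx.
    by move: h3; rewrite xz !mul0r ltxx.
  rewrite -mulrA (pmulr_rlt0 _ xpos) in h3.
  set G := [/\ _, _, _ & _].
  case: (real_ltgt0P uR) => [upos|uneg|uz]; rewrite /G.
  - have vneg : v < 0 by rewrite -(pmulr_rlt0 _ upos).
    have := sub_core _ _ _ _ c0 xpos upos vneg (hu uR) h1 hP. by [].
  - have vpos : 0 < v by rewrite -(nmulr_rlt0 _ uneg).
    have h1' : xi + v + u = c + 1 by rewrite -h1; ring.
    have hP' : (c - xi) * (c - v) * (c - u) < 0 by rewrite mulrAC.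
    case: (sub_core _ _ _ _ c0 xpos vpos uneg (hv vR) h1' hP') => *; by split.
  - by move: h3; rewrite uz mul0r ltxx.
have hconj : (u^* - u) * (u^* - v) = 0.
  have e : (u^*) ^+ 2 - (u+v)^* * u^* + (u*v)^* = (u ^+ 2 - (u+v)*u + u*v)^*.
    by rewrite ?(rmorphD, rmorphN, rmorphM, rmorphXn).
  rewrite (conj_Creal sR) (conj_Creal pR) in e.
  have e0 : u ^+ 2 - (u+v)*u + u*v = 0 by ring.
  rewrite e0 rmorph0 in e.
  rewrite -e; ring.
have uv : u^* = v.
  move/eqP: hconj; rewrite mulf_eq0 !subr_eq0 => /orP[/eqP h|/eqP //].
  by move: uR; rewrite (CrealE u) h eqxx.
have u0 : u != 0 by apply: contra uR => /eqP ->; rewrite rpred0.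
have ppos : 0 < u * v by rewrite -uv -normCK exprn_gt0 // normr_gt0.
rewrite -mulrA (pmulr_llt0 _ ppos) in h3.
have cu0 : c - u != 0.
  by apply: contra uR; rewrite subr_eq0 => /eqP <-.
have qpos : 0 < (c - u) * (c - v).
  have -> : c - v = (c - u)^* by rewrite -uv -{1}(conj_Creal cR) ?(rmorphD, rmorphN).
  by rewrite -normCK exprn_gt0 // normr_gt0.
rewrite -mulrA (pmulr_llt0 _ qpos) subr_lt0 in hP.
by have := lt_trans (le_lt_trans c0 hP) h3; rewrite ltxx.
Qed.

Lemma hornerP (c S F : nat) (x : algC) :
  (thrP c S F).[x] = x ^+ 3 - (c%:R + 1) * x ^+ 2 + (c%:R - S%:R) * x + ((c * S)%:R - F%:R).
Proof.
rewrite /thrP !hornerE !rmorphB /= -natr1 addrA; reflexivity.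
Qed.

Lemma hornerdP (c S F : nat) (x : algC) :
  (thrP c S F)^`().[x] = 3%:R * x ^+ 2 - 2%:R * (c%:R + 1) * x + (c%:R - S%:R).
Proof.
rewrite /thrP !derivE !hornerE /= rmorphB /= -natr1.
rewrite (_ : (c%:~R : algC) = c%:R) // (_ : (S%:~R : algC) = S%:R) //.
ring.
Qed.

Lemma vieta2 (K1 K2 K3 xi eta : algC) :
  xi^+3 - K1*xi^+2 + K2*xi + K3 = 0 -> eta^+3 - K1*eta^+2 + K2*eta + K3 = 0 ->
  xi != eta ->
  xi*eta + xi*(K1-xi-eta) + eta*(K1-xi-eta) = K2 /\ xi*eta*(K1-xi-eta) = -K3.
Proof.
move=> hx he ne.
set e2 := xi*eta + xi*(K1-xi-eta) + eta*(K1-xi-eta).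
set e3 := xi*eta*(K1-xi-eta).
have A : (K2 - e2) * xi + (K3 + e3) = 0 by rewrite -hx /e2 /e3; ring.
have B : (K2 - e2) * eta + (K3 + e3) = 0 by rewrite -he /e2 /e3; ring.
have C : (K2 - e2) * (xi - eta) = 0.
  have -> : (K2 - e2) * (xi - eta) = ((K2 - e2) * xi + (K3 + e3)) - ((K2 - e2) * eta + (K3 + e3)).
    ring.
  by rewrite A B subrr.
move/eqP: C; rewrite mulf_eq0 !subr_eq0 (negbTE ne) orbF => /eqP h2.
split => //.
move: A; rewrite h2 subrr mul0r add0r => /eqP; rewrite addr_eq0 => /eqP ->; by rewrite opprK.
Qed.

Lemma vieta1 (K1 K2 K3 xi : algC) :
  xi^+3 - K1*xi^+2 + K2*xi + K3 = 0 -> 3%:R * xi ^+ 2 - 2%:R * K1 * xi + K2 = 0 ->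
  xi*xi + xi*(K1-2%:R*xi) + xi*(K1-2%:R*xi) = K2 /\ xi*xi*(K1-2%:R*xi) = -K3.
Proof.
move=> hx hd; split.
  apply/eqP; rewrite -subr_eq0; apply/eqP.
  have -> : xi*xi + xi*(K1-2%:R*xi) + xi*(K1-2%:R*xi) - K2 = - (3%:R * xi ^+ 2 - 2%:R * K1 * xi + K2).
    ring.
  by rewrite hd oppr0.
apply/eqP; rewrite -subr_eq0; apply/eqP.
have -> : xi*xi*(K1-2%:R*xi) - - K3 = (xi^+3 - K1*xi^+2 + K2*xi + K3) - xi * (3%:R * xi ^+ 2 - 2%:R * K1 * xi + K2).
  ring.
by rewrite hx hd mulr0 subrr.
Qed.

Lemma apply_core (c S F : nat) (xi u v : algC) :
  (0 < F)%N -> (F < c * S)%N -> xi \is Num.real ->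
  (forall r : algC, r \is Num.real -> root (thrP c S F) r -> r <= xi) ->
  xi + u + v = c%:R + 1 -> xi*u + xi*v + u*v = c%:R - S%:R ->
  xi*u*v = - ((c * S)%:R - F%:R) ->
  [/\ u != xi, v != xi, `|u| < `|xi| & `|v| < `|xi|].
Proof.
move=> F0 FS xR hmax h1 h2 h3.
have h3' : (c * S)%:R - F%:R = - (xi*u*v) by rewrite h3 opprK.
have fac : forall x, (thrP c S F).[x] = (x - xi) * (x - u) * (x - v).
  by move=> x; rewrite hornerP -h1 -h2 h3'; ring.
apply: (core (c%:R) xi u v) => //.
- by rewrite h2 rpredB // realn.
- by rewrite h3 oppr_lt0 subr_gt0 ltr_nat.
- rewrite -fac hornerP natrM.
  have -> : (c%:R : algC) ^+ 3 - (c%:R + 1) * c%:R ^+ 2 + (c%:R - S%:R) * c%:R +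
     (c%:R * S%:R - F%:R) = - F%:R by ring.
  by rewrite oppr_lt0 ltr0n.
- by move=> uR; apply: hmax => //; rewrite /root fac subrr mulr0 mul0r.
- by move=> vR; apply: hmax => //; rewrite /root fac subrr mulr0.
Qed.

Lemma poly_main (c S F : nat) (xi : algC) :
  (0 < F)%N -> (F < c * S)%N -> xi \is Num.real ->
  root (thrP c S F) xi ->
  (forall r : algC, r \is Num.real -> root (thrP c S F) r -> r <= xi) ->
  ~~ ((('X - xi%:P) ^+ 2) %| thrP c S F) /\
  (forall eta : algC, root (thrP c S F) eta -> eta != xi -> `|eta| < `|xi|).
Proof.
move=> F0 FS xR hx hmax.
have hx' : xi ^+ 3 - (c%:R + 1) * xi ^+ 2 + (c%:R - S%:R) * xi + ((c * S)%:R - F%:R) = 0.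
  by rewrite -hornerP; apply/eqP.
split.
  apply/negP => /dvdpP [q hq].
  have hd : 3%:R * xi ^+ 2 - 2%:R * (c%:R + 1) * xi + (c%:R - S%:R) = 0.
    rewrite -(hornerdP c S F) hq derivM deriv_exp !hornerE /= subrr.
    by rewrite !(mulr0, expr1, addr0).
  have [e2 e3] := vieta1 _ _ _ _ hx' hd.
  have e1 : xi + xi + ((c%:R + 1) - 2%:R * xi) = c%:R + 1 by ring.
  by case: (apply_core _ _ _ _ _ _ F0 FS xR hmax e1 e2 e3); rewrite eqxx.
move=> eta he ne.
have ne' : xi != eta by rewrite eq_sym.
have he' : eta ^+ 3 - (c%:R + 1) * eta ^+ 2 + (c%:R - S%:R) * eta + ((c * S)%:R - F%:R) = 0.
  by rewrite -hornerP; apply/eqP.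
have [e2 e3] := vieta2 _ _ _ _ _ hx' he' (ne' ).
have e1 : xi + eta + ((c%:R + 1) - xi - eta) = c%:R + 1 by ring.
by case: (apply_core _ _ _ _ _ _ F0 FS xR hmax e1 e2 e3).
Qed.
From mathcomp Require Import zify.

Lemma complete_size n (a : 'I_n -> bool) : (forall i, a i) -> thr_size a = 'C(n, 2).
Proof.
move=> all1; rewrite /thr_size.
have -> : [set p : 'I_n * 'I_n | (p.1 < p.2)%N && thr_adj a p.1 p.2] =
          [set p : 'I_n * 'I_n | (p.1 < p.2)%N].
  apply/setP => p; rewrite !inE /thr_adj.
  by case h: (p.1 < p.2)%N => //=; rewrite all1.
rewrite cardsE -sum1_card.
transitivity (\sum_(i < n) \sum_(j < n | (i < j)%N) 1)%N.
  by rewrite pair_big_dep /=; apply: eq_bigl => p.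
rewrite (exchange_big_dep xpredT) //=.
transitivity (\sum_(j < n) j)%N; last by rewrite -bin2_sum big_mkord.
apply: eq_bigr => j _.
rewrite -(big_ord_widen n (fun _ => 1%N) (ltnW (ltn_ord j))).
by rewrite sum1_card card_ord.
Qed.

Lemma last_type1 n (a : 'I_n -> bool) (i : 'I_n) :
  (1 < n)%N -> thr_connected a -> val i = n.-1 -> a i.
Proof.
move=> n1 hc hi; case ai: (a i) => //.
have n0 : (0 < n)%N by apply: ltn_trans n1.
have := hc i (Ordinal n0); case/connectP => p hp hl.
case: p hp hl => [|y p] /=.
  move=> _ /(congr1 val) /= h; have hi2 : nat_of_ord i = n.-1 := hi; lia.
case/andP => hy _ _; move: hy; rewrite /thr_adj ai.
have := ltn_ord y.
case: ifP => [iy|_]; first by have hi2 : nat_of_ord i = n.-1 := hi; lia.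
by case: ifP.
Qed.

Lemma b_bounds n (a : 'I_n -> bool) (i : 'I_n) :
  (1 < n)%N -> (forall i : 'I_n, val i = 0%N -> a i) -> thr_connected a ->
  ~~ a i -> (0 < bzp a i)%N /\ (bzp a i < num_type1 a)%N.
Proof.
move=> n1 h0 hc ai.
have n0 : (0 < n)%N by apply: ltn_trans n1.
have pn : (n.-1 < n)%N by lia.
have al : a (Ordinal pn) by apply: last_type1.
have a0 : a (Ordinal n0) by apply: h0.
have i0 : (0 < val i)%N.
  case: (posnP (val i)) => // hi; by move: ai; rewrite h0.
have il : (val i < n.-1)%N.
  rewrite ltn_neqAle -ltnS prednK // ltn_ord andbT.
  by apply/eqP => hi; move: ai; rewrite (last_type1 _ _ _ n1 hc hi).
split.
  apply/card_gt0P; exists (Ordinal pn); by rewrite inE /= il al.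
rewrite /bzp /num_type1; apply: proper_card; apply/properP; split.
  by apply/subsetP => j; rewrite !inE => /andP[].
exists (Ordinal n0); first by rewrite inE.
by rewrite inE.
Qed.

Lemma F_bounds n (a : 'I_n -> bool) (i0 : 'I_n) :
  (1 < n)%N -> (forall i : 'I_n, val i = 0%N -> a i) -> thr_connected a ->
  ~~ a i0 -> (0 < F1 a)%N /\ (F1 a < num_type1 a * sum_b a)%N.
Proof.
move=> n1 h0 hc ai0.
have [b0 bc] := b_bounds _ _ _ n1 h0 hc ai0.
have e : (num_type1 a * sum_b a = \sum_(i | ~~ a i) num_type1 a * bzp a i)%N.
  by rewrite /sum_b big_distrr.
rewrite e /F1 (bigD1 i0 ai0) /= (bigD1 (F := fun i => (num_type1 a * bzp a i)%N) i0 ai0) /=.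
have h1 : (\sum_(i | ~~ a i && (i != i0)) bzp a i ^ 2 <=
           \sum_(i | ~~ a i && (i != i0)) num_type1 a * bzp a i)%N.
  apply: leq_sum => i /andP[hi _].
  have [_ hb] := b_bounds _ _ _ n1 h0 hc hi.
  by rewrite -mulnn leq_mul2r ltnW ?orbT.
have h2 : (bzp a i0 ^ 2 < num_type1 a * bzp a i0)%N.
  by rewrite -mulnn ltn_pmul2r.
have h3 : (0 < bzp a i0 ^ 2)%N by rewrite expn_gt0 b0.
split; first by rewrite (leq_trans h3) ?leq_addr.
by rewrite -addSn; apply: leq_add.
Qed.

Theorem lemma5p4 (n : nat) (a : 'I_n -> bool) (xi : algC) :
  (4 <= n)%N ->
  (forall i : 'I_n, val i = 0%N -> a i) ->
  thr_connected a ->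
  (n.-1 < thr_size a)%N -> (thr_size a < 'C(n, 2))%N ->
  xi \is Num.real ->
  root (thrP (num_type1 a) (sum_b a) (F1 a)) xi ->
  (forall r : algC, r \is Num.real ->
     root (thrP (num_type1 a) (sum_b a) (F1 a)) r -> r <= xi) ->
  ~~ ((('X - xi%:P) ^+ 2) %| thrP (num_type1 a) (sum_b a) (F1 a)) /\
  (forall eta : algC, root (thrP (num_type1 a) (sum_b a) (F1 a)) eta ->
     eta != xi -> `|eta| < `|xi|).
Proof.
move=> n4 h0 hc _ hs xR hx hmax.
have n1 : (1 < n)%N by apply: leq_trans n4.
case: (pickP (fun i => ~~ a i)) => [i0 ai0|none].
  have [F0 FS] := F_bounds _ _ _ n1 h0 hc ai0.
  exact: poly_main.
have : thr_size a = 'C(n, 2).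
  by apply: complete_size => i; move: (none i) => /= /negbFE.
by move=> e; move: hs; rewrite e ltnn.
Qed.
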